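(* Let $k\geq 3$ be an integer and $\ell\geq 2$ an even integer, and let $G_1^{\{\ell,k\}}$ and $G_2^{\{\ell,k\}}$ be the indistinguishability graphs (for any fixed permutation $\sigma\neq\mathrm{id}$ of $[k]$). Then both $G_1^{\{\ell,k\}}$ and $G_2^{\{\ell,k\}}$ admit a proper $k$-coloring (hence are $k$-partially $k$-colorable), $\Delta_{E(G_1^{\{\ell,k\}})}=\Delta_{E(G_2^{\{\ell,k\}})}=k$, and every $k$-partial $k$-coloring of $G_1^{\{\ell,k\}}$ (resp. $G_2^{\{\ell,k\}}$) is a proper $k$-coloring of that graph.
   Context: Let $[m]=\{1,\dots,m\}$. A $k$-partial $c$-coloring of a graph $H=(V,E)$ is a map $\gamma:V\to\{1,\dots,c\}$ such that every vertex $v$ has at least $\min\{k,\deg_H(v)\}$ neighbors $u$ with $\gamma(u)\neq\gamma(v)$. For a graph $H$ with at least one edge, $\Delta_{E(H)}=\max_{\{u,v\}\in E(H)}\min\{\deg_H(u),\deg_H(v)\}$. Path of cliques: for permutations $\tau_1,\dots,\tau_{\ell-1}$ of $[k]$, $P(\tau_1,\dots,\tau_{\ell-1})$ has vertex set $[k]\times[\ell]$ and edges $\{(a,i),(b,i)\}$ for $a\neq b$, $i\in[\ell]$, and $\{(a,i),(b,i+1)\}$ for $i\in[\ell-1]$, $a,b\in[k]$, $b\neq\tau_i(a)$. The $k$-edge-gadget transformation: given a graph $G$ and for each edge a chosen ordered pair $(u,v)$, keep all vertices of $G$, delete each edge $\{u,v\}$, and add $k$ new vertices $(u,v,1),\dots,(u,v,k)$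 forming a clique together with edges $\{u,(u,v,j)\}$ for $j=1,\dots,k-1$ and $\{v,(u,v,k)\}$. Indistinguishability graphs: let $G_1=P(\tau_1,\dots,\tau_{\ell-1})$ with all $\tau_i=\mathrm{id}$, and $G_2=P(\tau_1',\dots,\tau_{\ell-1}')$ with $\tau_i'=\mathrm{id}$ for $i\neq \ell/2$ and $\tau'_{\ell/2}=\sigma$, where $\sigma$ is a fixed permutation of $[k]$ different from the identity. $G_1^{\{\ell,k\}}$ (resp. $G_2^{\{\ell,k\}}$) is obtained from $G_1$ (resp. $G_2$) by the $k$-edge-gadget transformation, where an edge $\{(a,i),(b,i)\}$ with $a<b$ is oriented as $((a,i),(b,i))$ and an edge $\{(a,i),(b,i+1)\}$ is oriented as $((a,i),(b,i+1))$. *)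

(* Defs.v *)
From mathcomp Require Import all_boot all_fingroup.
Set Implicit Arguments. Unset Strict Implicit. Unset Printing Implicit Defensive.

(* Graphs are relations e : rel T on a finType T (intended symmetric,
   irreflexive). Indices are 0-based: [k] is 'I_k, colours are 'I_c. *)

Definition nbrs (T : finType) (e : rel T) (v : T) : {set T} := [set u | e v u].
Definition deg (T : finType) (e : rel T) (v : T) : nat := #|nbrs e v|.

Definition partial_coloring (T : finType) (k c : nat) (e : rel T)
  (g : T -> 'I_c) : Prop :=
  forall v, minn k (deg e v) <= #|[set u | e v u & g u != g v]|.

Definition proper_coloring (T : finType) (c : nat) (e : rel T)
  (g : T -> 'I_c) : Prop :=
  forall u v, e u v -> g u != g v.

Definition DeltaE (T : finType) (e : rel T) : nat :=
  \max_(p : T * T | e p.1 p.2) minn (deg e p.1) (deg e p.2).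

(* Path of cliques P(tau_1,...,tau_{l-1}) on 'I_k * 'I_l, 0-based:
   tau i joins layer i and layer i+1. *)
Definition poc_rel (k l : nat) (tau : nat -> {perm 'I_k}) : rel ('I_k * 'I_l) :=
  fun x y =>
    [|| ((x.2 : nat) == y.2) && (x.1 != y.1),
        ((y.2 : nat) == x.2.+1) && (y.1 != tau x.2 x.1) |
        ((x.2 : nat) == y.2.+1) && (x.1 != tau y.2 y.1)].

Definition poc_orient (k l : nat) (tau : nat -> {perm 'I_k}) : rel ('I_k * 'I_l) :=
  fun x y => poc_rel tau x y &&
    ((((x.2 : nat) == y.2) && (x.1 < y.1)) || ((y.2 : nat) == x.2.+1)).

(* k-edge-gadget transformation, given the orientation o (o u v holds iff
   {u,v} is an edge of G chosen with ordered pair (u,v)).  Vertex (u,v,j) of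
   the paper (j in 1..k) is inr (u,v,j-1). *)
Definition gadget_vertex (k : nat) (V : finType) (o : rel V) : finType :=
  (V + {t : V * V * 'I_k | o t.1.1 t.1.2})%type.

Definition gadget_rel (k : nat) (V : finType) (o : rel V) : rel (gadget_vertex k o) :=
  fun x y =>
    match x, y with
    | inl _, inl _ => false
    | inr s, inr t => ((val s).1 == (val t).1) && ((val s).2 != (val t).2)
    | inl w, inr t | inr t, inl w =>
        let: (u, v, j) := val t in
        ((w == u) && ((j : nat) < k.-1)) || ((w == v) && ((j : nat) == k.-1))
    end.

Definition tau_id (k : nat) : nat -> {perm 'I_k} := fun _ => 1%g.
(* tau'_{l/2} = sigma (1-based), i.e. 0-based index l/2 - 1 *)
Definition tau_sigma (k l : nat) (sigma : {perm 'I_k}) : nat -> {perm 'I_k} :=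
  fun i => if i == l./2.-1 then sigma else 1%g.

Definition G1_gadget (k l : nat) :=
  @gadget_rel k _ (@poc_orient k l (tau_id k)).
Definition G2_gadget (k l : nat) (sigma : {perm 'I_k}) :=
  @gadget_rel k _ (@poc_orient k l (tau_sigma l sigma)).
Arguments G1_gadget k l : clear implicits.
Arguments G2_gadget k l sigma : clear implicits.
Arguments partial_coloring T k c e g : clear implicits.
Arguments proper_coloring T c e g : clear implicits.

(* Main.v *)
Require Import Defs.
From mathcomp Require Import all_boot all_fingroup zify.

Section Gen.
Variables (k : nat) (V : finType) (o : rel V).
Local Notation K := k.+1.
Local Notation GV := (@gadget_vertex K V o).
Local Notation e := (@gadget_rel K V o).

Lemma gsym x y : e x y = e y x.
Proof.
case: x => [w|s]; case: y => [w'|t] //=.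
by rewrite eq_sym [_.2 == _]eq_sym.
Qed.

Definition mkv (t : {t : V * V * 'I_K | o t.1.1 t.1.2}) (j : 'I_K) : GV :=
  inr (exist (fun t : V * V * 'I_K => o t.1.1 t.1.2) ((val t).1, j) (valP t)).

Lemma deg_inr t : deg e (inr t) = K.
Proof.
pose w0 := if (val t).2 < k then (val t).1.1 else (val t).1.2.
pose f j := if j == (val t).2 then (inl w0 : GV) else mkv t j.
have finj : injective f.
  move=> j1 j2; rewrite /f /mkv.
  case: eqP => [->|h1]; case: eqP => [->|h2] //.
  by move=> [].
rewrite /deg.
have -> : nbrs e (inr t) = f @: setT.
  apply/setP => x; rewrite inE.
  clear finj; case: t @w0 @f => [[[u v] j] H] /=.
  apply/idP/idP.
  - case: x => [w | [[[u' v'] j'] H']] /=.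
    + move=> hw; apply/imsetP; exists j => //; rewrite eqxx; congr inl.
      case/orP: hw => /andP [/eqP -> hj].
        by rewrite hj.
      by rewrite (eqP hj) ltnn.
    + case/andP => /eqP huv hj; apply/imsetP; exists j' => //.
      rewrite eq_sym (negPf hj) /mkv; congr inr; apply: val_inj => /=.
      by rewrite huv.
  - case/imsetP=> j' _ hx; rewrite hx; clear hx.
    case: ifP => hjj /=.
      case: ifP => hj; first by rewrite eqxx.
      have := ltn_ord j; rewrite ltnS leq_eqVlt hj orbF => ->.
      by rewrite eqxx orbT.
    by rewrite eqxx /= eq_sym hjj.
by rewrite card_imset // cardsT card_ord.
Qed.

Lemma pc_proper g : partial_coloring _ K K e g -> proper_coloring _ K e g.
Proof.
move=> pc.
have key : forall t y, e (inr t) y -> g y != g (inr t).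
  move=> t y ety.
  have := pc (inr t); rewrite deg_inr minnn => hc.
  have sub : [set u | e (inr t) u & g u != g (inr t)] \subset nbrs e (inr t).
    by apply/subsetP => z; rewrite !inE => /andP [].
  have : [set u | e (inr t) u & g u != g (inr t)] == nbrs e (inr t).
    by rewrite eqEcard sub /= -/(deg e (inr t)) deg_inr.
  move/eqP/setP/(_ y); by rewrite !inE ety.
move=> x y; case: x => [w|s].
  case: y => [w'|t] //.
  by rewrite gsym => /key.
by move/key; rewrite eq_sym.
Qed.

Lemma gad_proper (c : V -> 'I_K) :
  (forall u v, o u v -> c u != c v) ->
  exists g, proper_coloring _ K e g.
Proof.
move=> hc.
pose g (x : GV) : 'I_K := match x with
  | inl w => c w
  | inr t => tperm (c (val t).1.1) ord_max (val t).2 end.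
exists g => x y.
have mixed : forall w t, e (inl w) (inr t) -> g (inl w) != g (inr t).
  move=> w [[[u v] j] H] /=.
  case/orP => /andP [/eqP -> hj].
    rewrite -{1}(tpermR (c u) ord_max) (inj_eq perm_inj).
    by apply/eqP => h; move: hj; rewrite -h /= ltnn.
  have -> : j = ord_max by apply: val_inj; exact/eqP.
  by rewrite tpermR eq_sym hc.
case: x => [w|s]; case: y => [w'|t] //.
- exact: mixed.
- by rewrite gsym => /mixed; rewrite eq_sym.
- move=> /= /andP [/eqP h1 h2]; rewrite h1 (inj_eq perm_inj) //.
Qed.

Lemma proper_partial g : proper_coloring _ K e g -> partial_coloring _ K K e g.
Proof.
move=> hp v.
have -> : [set u | e v u & g u != g v] = nbrs e v.
  apply/setP => u; rewrite !inE; case: (boolP (e v u)) => //= h.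
  by rewrite eq_sym hp.
exact: geq_minr.
Qed.

Lemma gad_Delta u v : 0 < k -> o u v -> DeltaE e = K.
Proof.
move=> kpos huv.
pose t := exist (fun t : V * V * 'I_K => o t.1.1 t.1.2) (u, v, ord0) huv.
apply/eqP; rewrite eqn_leq; apply/andP; split.
  apply/bigmax_leqP => [[x y]] /=.
  case: x => [w|s]; last by rewrite deg_inr geq_minl.
  case: y => [w'|t'] //= _.
  by rewrite deg_inr geq_minr.
have he : e (inr t) (mkv t ord_max).
  by rewrite /= eqxx /=; apply/eqP => /(congr1 val) /= h; move: kpos; rewrite -h.
have := @leq_bigmax_cond _ (fun p : GV * GV => e p.1 p.2)
  (fun p => minn (deg e p.1) (deg e p.2)) (inr t, mkv t ord_max) he.
by rewrite /= /mkv !deg_inr minnn.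
Qed.
End Gen.
Lemma orient_cases k l tau (x y : 'I_k * 'I_l) : poc_orient tau x y ->
  (((x.2 : nat) == y.2) && (x.1 != y.1)) ||
  (((y.2 : nat) == x.2.+1) && (y.1 != tau x.2 x.1)).
Proof.
rewrite /poc_orient /poc_rel; case/andP => h /orP [/andP [e1 lt] | e2].
  by rewrite e1 /= -(inj_eq val_inj) /= ltn_eqF.
rewrite e2 /=; move: h; rewrite (eqP e2) (ltn_eqF (ltnSn _)) /= eqxx /=.
case/orP => // /andP [/eqP h]; exfalso; lia.
Qed.

Lemma poc_edge k l tau : 1 < k -> 0 < l ->
  exists u v, @poc_orient k l tau u v.
Proof.
move=> hk hl.
exists (Ordinal (ltnW hk), Ordinal hl), (Ordinal hk, Ordinal hl).
by rewrite /poc_orient /poc_rel /=.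
Qed.

Lemma col1 k l (x y : 'I_k * 'I_l) : poc_orient (tau_id k) x y -> x.1 != y.1.
Proof.
case/orient_cases/orP => /andP [_]; first by [].
by rewrite /tau_id perm1 eq_sym.
Qed.

Lemma col2 k l sigma (x y : 'I_k * 'I_l) : 2 <= l ->
  poc_orient (tau_sigma l sigma) x y ->
  (if x.2 < l./2 then x.1 else (sigma^-1)%g x.1) !=
  (if y.2 < l./2 then y.1 else (sigma^-1)%g y.1).
Proof.
move=> hl.
case/orient_cases/orP => /andP [e1 h].
  by rewrite (eqP e1); case: ifP => _ //; rewrite (inj_eq perm_inj).
rewrite /tau_sigma (eqP e1) in h *.
have hl2 : 0 < l./2 by move: hl; clear; case: l => [|[|l]].
case: (eqVneq (x.2 : nat) l./2.-1) h => [hx | hx] h.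
  rewrite hx prednK // ltnn leqnn.
  apply/eqP => hh; move: h; rewrite hh permKV eqxx //.
have hiff : (x.2.+1 < l./2) = (x.2 < l./2).
  apply/idP/idP => [/ltnW //|].
  rewrite -{1}[l./2]prednK // ltnS leq_eqVlt (negPf hx) /=.
  by rewrite -ltnS prednK.
rewrite perm1 in h; rewrite hiff; case: ifP => _; first by rewrite eq_sym.
by rewrite (inj_eq perm_inj) eq_sym.
Qed.

Theorem mainTheorem10 (k l : nat) (sigma : {perm 'I_k}) :
  3 <= k -> 2 <= l -> ~~ odd l -> sigma != 1%g ->
  ((exists g, proper_coloring _ k (G1_gadget k l) g) /\
   (exists g, partial_coloring _ k k (G1_gadget k l) g) /\
   DeltaE (G1_gadget k l) = k /\
   (forall g, partial_coloring _ k k (G1_gadget k l) g ->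
              proper_coloring _ k (G1_gadget k l) g)) /\
  ((exists g, proper_coloring _ k (G2_gadget k l sigma) g) /\
   (exists g, partial_coloring _ k k (G2_gadget k l sigma) g) /\
   DeltaE (G2_gadget k l sigma) = k /\
   (forall g, partial_coloring _ k k (G2_gadget k l sigma) g ->
              proper_coloring _ k (G2_gadget k l sigma) g)).
Proof.
case: k sigma => [|k] // sigma hk hl _ _.
have hk1 : 1 < k.+1 by lia.
have hl0 : 0 < l by lia.
have kpos : 0 < k by lia.
split.
  have [u [v huv]] := @poc_edge _ l (tau_id k.+1) hk1 hl0.
  have [g hg] : exists g, proper_coloring _ k.+1 (G1_gadget k.+1 l) g.
    by apply: (@gad_proper k _ _ (fun x => x.1)) => x y /col1.
  split; first by exists g.
  split; first by exists g; apply: proper_partial.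
  split; first exact: (@gad_Delta k _ _ u v kpos huv).
  exact: pc_proper.
have [u [v huv]] := @poc_edge _ l (tau_sigma l sigma) hk1 hl0.
have [g hg] : exists g, proper_coloring _ k.+1 (G2_gadget k.+1 l sigma) g.
  by apply: (@gad_proper k _ _ (fun x : 'I_k.+1 * 'I_l => if x.2 < l./2 then x.1 else (sigma^-1)%g x.1))
     => x y /(@col2 _ _ sigma x y hl).
split; first by exists g.
split; first by exists g; apply: proper_partial.
split; first exact: (@gad_Delta k _ _ u v kpos huv).
exact: pc_proper.
Qed.
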